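(* For a cartesian uniform preorder $(A,R)$ the following are equivalent: (i) $(A,R)$ is relationally complete; (ii) $\mathsf{fam}(D(A,R))$ is a tripos.
   Context: A uniform preorder is a pair $(A,R)$ with $A$ a set and $R\subseteq P(A\times A)$ such that $\mathrm{id}_A\in R$, $s\circ r\in R$ whenever $r,s\in R$, and $s\in R$ whenever $r\in R$ and $s\subseteq r$. Monotone maps $f:(A,R)\to(B,S)$ are functions with $\{(fa,fa')\mid(a,a')\in r\}\in S$ for all $r\in R$, ordered by $f\le g$ iff $\{(fa,ga)\mid a\in A\}\in S$; this is a locally ordered category $\mathsf{UOrd}$ with finite 2-products (terminal: singleton; product $(A\times B,R\otimes S)$ with $R\otimes S$ the relations contained in some $r\times s$). $(A,R)$ is cartesian if the terminal projection $(A,R)\to1$ and the diagonal $(A,R)\to(A,R)\times(A,R)$ have right adjoints $\top:1\to A$ and $\wedge:A\times A\to A$ (adjunction $f\dashv g$: $\mathrm{id}\le gf$, $fg\le\mathrm{id}$). A cartesian $(A,R)$ is relationally complete if there is a relation $@\in R$ such that for every $r\in R$ there is a total function $\tilde r:A\to A$ whose graph is in $R$ with: for all $a,b,c\in A$, $(a\wedge b,c)\in r$ implies $(\tilde r(a)\wedge b,c)\in @$. $D(A,R)=(PA,DR)$, $DR$ being the relations on the powerset $PA$ contained in some $[r]=\{(U,V)\mid\forall a\in U\,\exists b\in V.\,(a,b)\in r\}$, $r\in R$. For a uniform preorder $(B,S)$, $\mathsf{fam}(B,S)$ is the indexed preorder (pseudofunctor $\mathsf{Set}^{op}\to\mathsf{Ord}$)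 $I\mapsto(B^I,\le)$, $\varphi\le\psi$ iff $\{(\varphi i,\psi i)\mid i\in I\}\in S$, reindexing $u^*$ by precomposition. A tripos is an indexed preorder $\mathcal{P}$ such that: its fibers are Heyting preorders (finite meets and, for each $a$, a right adjoint $a\Rightarrow-$ to $-\wedge a$; finite joins not required), this structure preserved up to isomorphism by reindexing; every $u^*$ has a right adjoint $\forall_u$ satisfying the Beck–Chevalley condition ($u^*\forall_v\cong\forall_{\bar v}\bar u^*$ for every pullback of $u,v$ in $\mathsf{Set}$ with projections $\bar u,\bar v$); and $\mathcal{P}$ has a generic predicate, i.e. some $\iota\in\mathcal{P}(C)$ such that every predicate $\varphi\in\mathcal{P}(I)$ is isomorphic to $f^*\iota$ for some $f:I\to C$. *)

(* Defs.v *)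
Definition relT (A : Type) := A -> A -> Prop.
Definition subrel {A : Type} (s r : relT A) : Prop := forall x y, s x y -> r x y.
Definition idrel {A : Type} : relT A := fun x y => x = y.
(* comprel r s = s ∘ r *)
Definition comprel {A : Type} (r s : relT A) : relT A :=
  fun x z => exists y, r x y /\ s y z.

Definition is_upre (A : Type) (R : relT A -> Prop) : Prop :=
  R idrel /\
  (forall r s, R r -> R s -> R (comprel r s)) /\
  (forall r s, R r -> subrel s r -> R s).

Definition image_rel {A B : Type} (f : A -> B) (r : relT A) : relT B :=
  fun b b' => exists a a', r a a' /\ f a = b /\ f a' = b'.

Definition monotone {A B : Type} (R : relT A -> Prop) (S : relT B -> Prop)
  (f : A -> B) : Prop := forall r, R r -> S (image_rel f r).

Definition map_le {A B : Type} (S : relT B -> Prop) (f g : A -> B) : Prop :=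
  S (fun b b' => exists a, f a = b /\ g a = b').

Definition term_rel : relT unit -> Prop := fun _ => True.

Definition prod_rel {A B : Type} (R : relT A -> Prop) (S : relT B -> Prop)
  : relT (A * B) -> Prop :=
  fun t => exists r s, R r /\ S s /\
    subrel t (fun p q => r (fst p) (fst q) /\ s (snd p) (snd q)).

Definition adjoint {A B : Type} (R : relT A -> Prop) (S : relT B -> Prop)
  (f : A -> B) (g : B -> A) : Prop :=
  monotone R S f /\ monotone S R g /\
  map_le R (fun a => a) (fun a => g (f a)) /\
  map_le S (fun b => f (g b)) (fun b => b).

Definition is_cartesian {A : Type} (R : relT A -> Prop)
  (top : unit -> A) (meet : A * A -> A) : Prop :=
  adjoint R term_rel (fun _ => tt) top /\
  adjoint R (prod_rel R R) (fun a => (a, a)) meet.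

Definition rel_complete {A : Type} (R : relT A -> Prop) (meet : A * A -> A) : Prop :=
  exists at_ : relT A, R at_ /\
    forall r, R r -> exists rt : A -> A,
      R (fun a b => b = rt a) /\
      forall a b c, r (meet (a, b)) c -> at_ (meet (rt a, b)) c.

Definition lift_rel {A : Type} (r : relT A) : relT (A -> Prop) :=
  fun U V => forall a, U a -> exists b, V b /\ r a b.

Definition DR {A : Type} (R : relT A -> Prop) : relT (A -> Prop) -> Prop :=
  fun t => exists r, R r /\ subrel t (lift_rel r).

Definition fam_P (B : Type) : Type -> Type := fun I => I -> B.
Definition fam_le {B : Type} (S : relT B -> Prop) :
  forall I : Type, fam_P B I -> fam_P B I -> Prop :=
  fun I phi psi => S (fun b b' => exists i, phi i = b /\ psi i = b').
Definition fam_re (B : Type) :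
  forall I J : Type, (J -> I) -> fam_P B I -> fam_P B J :=
  fun I J u phi => fun j => phi (u j).

Section Tripos.
Variable P : Type -> Type.
Variable le : forall I : Type, P I -> P I -> Prop.
Variable re : forall I J : Type, (J -> I) -> P I -> P J.

Definition piso (I : Type) (x y : P I) : Prop := le I x y /\ le I y x.

(* pseudofunctor Set^op -> Ord *)
Definition is_indexed_preorder : Prop :=
  (forall I x, le I x x) /\
  (forall I x y z, le I x y -> le I y z -> le I x z) /\
  (forall I J (u : J -> I) x y, le I x y -> le J (re I J u x) (re I J u y)) /\
  (forall I x, piso I (re I I (fun i => i) x) x) /\
  (forall I J K (u : J -> I) (v : K -> J) x,
      piso K (re I K (fun k => u (v k)) x) (re J K v (re I J u x))).

Definition is_top (I : Type) (t : P I) : Prop := forall x, le I x t.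
Definition is_meet (I : Type) (x y m : P I) : Prop :=
  le I m x /\ le I m y /\ forall z, le I z x -> le I z y -> le I z m.
Definition is_imp (I : Type) (a b c : P I) : Prop :=
  forall x m, is_meet I x a m -> (le I m b <-> le I x c).

Definition heyting_fibres : Prop :=
  forall I : Type,
    (exists t, is_top I t) /\
    (forall x y, exists m, is_meet I x y m) /\
    (forall a b, exists c, is_imp I a b c).

Definition reindex_preserves_heyting : Prop :=
  forall I J (u : J -> I),
    (forall t, is_top I t -> is_top J (re I J u t)) /\
    (forall x y m, is_meet I x y m ->
       is_meet J (re I J u x) (re I J u y) (re I J u m)) /\
    (forall a b c, is_imp I a b c ->
       is_imp J (re I J u a) (re I J u b) (re I J u c)).

Definition is_right_adjoint_re (I J : Type) (u : J -> I) (all : P J -> P I) : Prop :=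
  forall x y, le J (re I J u x) y <-> le I x (all y).

Definition is_pullback {I J K L : Type} (u : J -> I) (v : K -> I)
  (p1 : L -> J) (p2 : L -> K) : Prop :=
  (forall l, u (p1 l) = v (p2 l)) /\
  (forall j k, u j = v k -> exists l, (p1 l = j /\ p2 l = k) /\
       forall l', p1 l' = j /\ p2 l' = k -> l' = l).

Definition has_universal : Prop :=
  (forall I J (u : J -> I), exists all, is_right_adjoint_re I J u all) /\
  (forall I J K L (u : J -> I) (v : K -> I) (p1 : L -> J) (p2 : L -> K)
          (all_v : P K -> P I) (all_p1 : P L -> P J),
     is_pullback u v p1 p2 ->
     is_right_adjoint_re I K v all_v ->
     is_right_adjoint_re J L p1 all_p1 ->
     forall y : P K, piso J (re I J u (all_v y)) (all_p1 (re K L p2 y))).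

Definition has_generic : Prop :=
  exists (C : Type) (iota : P C),
    forall (I : Type) (phi : P I), exists f : I -> C, piso I phi (re C I f iota).

Definition is_tripos : Prop :=
  is_indexed_preorder /\ heyting_fibres /\ reindex_preserves_heyting /\
  has_universal /\ has_generic.
End Tripos.

(* Main.v *)
Require Import Defs.
From Stdlib Require Import ClassicalEpsilon.

Section S.
Variables (A : Type) (R : relT A -> Prop) (meet : A * A -> A).
Hypothesis Hid : R idrel.
Hypothesis Hcomp : forall r s, R r -> R s -> R (comprel r s).
Hypothesis Hdown : forall r s, R r -> subrel s r -> R s.
Hypothesis Hmm : forall r s, R r -> R s ->
  R (fun x y => exists a b a' b', r a a' /\ s b b' /\ x = meet (a,b) /\ y = meet (a',b')).
Hypothesis Hdup : R (fun a b => b = meet (a,a)).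
Hypothesis Hp1 : R (fun x y => exists b, x = meet (y,b)).
Hypothesis Hp2 : R (fun x y => exists a, x = meet (a,y)).

Local Notation le I := (fam_le (DR R) I).

Lemma le_intro I (phi psi : I -> A -> Prop) r : R r ->
  (forall i a, phi i a -> exists b, psi i b /\ r a b) -> le I phi psi.
Proof.
  intros Hr H. unfold fam_le, DR. exists r. split; [exact Hr|].
  intros U V [i [<- <-]]. exact (H i).
Qed.

Lemma le_elim I (phi psi : I -> A -> Prop) : le I phi psi ->
  exists r, R r /\ forall i a, phi i a -> exists b, psi i b /\ r a b.
Proof.
  intros [r [Hr Hs]]. exists r; split; auto. intros i a Ha.
  exact (Hs (phi i) (psi i) (ex_intro _ i (conj eq_refl eq_refl)) a Ha).
Qed.

Lemma le_pw I (phi psi : I -> A -> Prop) :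
  (forall i a, phi i a -> psi i a) -> le I phi psi.
Proof.
  intros H. apply le_intro with idrel; auto. intros i a Ha. exists a; split; auto. reflexivity.
Qed.

Lemma le_refl I (phi : I -> A -> Prop) : le I phi phi.
Proof. apply le_pw; auto. Qed.

Lemma le_trans I (x y z : I -> A -> Prop) : le I x y -> le I y z -> le I x z.
Proof.
  intros H1 H2. apply le_elim in H1 as [r [Hr H1]]. apply le_elim in H2 as [s [Hs H2]].
  apply le_intro with (comprel r s); auto.
  intros i a Ha. destruct (H1 i a Ha) as [b [Hb Hab]]. destruct (H2 i b Hb) as [c [Hc Hbc]].
  exists c; split; auto. exists b; auto.
Qed.

Lemma le_re I J (u : J -> I) (x y : I -> A -> Prop) : le I x y ->
  le J (fun j => x (u j)) (fun j => y (u j)).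
Proof.
  intros H. apply le_elim in H as [r [Hr H]]. apply le_intro with r; auto.
Qed.

Definition meetP {I} (x y : I -> A -> Prop) : I -> A -> Prop :=
  fun i c => exists a b, x i a /\ y i b /\ c = meet (a,b).

Lemma meet_l I (x y : I -> A -> Prop) : le I (meetP x y) x.
Proof.
  apply le_intro with (fun x y => exists b, x = meet (y,b)); auto.
  intros i c [a [b [Ha [Hb ->]]]]. exists a; split; auto. exists b; auto.
Qed.

Lemma meet_r I (x y : I -> A -> Prop) : le I (meetP x y) y.
Proof.
  apply le_intro with (fun x y => exists a, x = meet (a,y)); auto.
  intros i c [a [b [Ha [Hb ->]]]]. exists b; split; auto. exists a; auto.
Qed.

Lemma meet_univ I (x y z : I -> A -> Prop) : le I z x -> le I z y -> le I z (meetP x y).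
Proof.
  intros H1 H2. apply le_elim in H1 as [r [Hr H1]]. apply le_elim in H2 as [s [Hs H2]].
  apply le_intro with (comprel (fun a b => b = meet (a,a))
     (fun x y => exists a b a' b', r a a' /\ s b b' /\ x = meet (a,b) /\ y = meet (a',b'))); auto.
  intros i c Hc. destruct (H1 i c Hc) as [a [Ha Hca]]. destruct (H2 i c Hc) as [b [Hb Hcb]].
  exists (meet (a,b)); split. { exists a, b; auto. }
  exists (meet (c,c)); split; auto. exists c, c, a, b; auto.
Qed.

Lemma meetP_is_meet I (x y : I -> A -> Prop) :
  is_meet (fam_P (A -> Prop)) (fam_le (DR R)) I x y (meetP x y).
Proof.
  split; [apply meet_l|split; [apply meet_r|]]. intros z; apply meet_univ.
Qed.

Lemma is_meet_iso I (x y m : I -> A -> Prop) :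
  is_meet (fam_P (A -> Prop)) (fam_le (DR R)) I x y m ->
  le I m (meetP x y) /\ le I (meetP x y) m.
Proof.
  intros [H1 [H2 H3]]. split.
  - apply meet_univ; auto.
  - apply H3; [apply meet_l|apply meet_r].
Qed.

Lemma is_meet_transport I (x y m m' : I -> A -> Prop) :
  is_meet (fam_P (A -> Prop)) (fam_le (DR R)) I x y m ->
  le I m m' -> le I m' m ->
  is_meet (fam_P (A -> Prop)) (fam_le (DR R)) I x y m'.
Proof.
  intros [H1 [H2 H3]] Ha Hb. split; [|split].
  - eapply le_trans; eauto.
  - eapply le_trans; eauto.
  - intros z Hz1 Hz2. eapply le_trans; [apply H3; eauto|]; auto.
Qed.


Variable at_ : relT A.
Hypothesis Hat : R at_.
Hypothesis Hrc : forall r, R r -> exists rt : A -> A, R (fun a b => b = rt a) /\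
  forall a b c, r (meet (a,b)) c -> at_ (meet (rt a, b)) c.

Definition impP {I} (x y : I -> A -> Prop) : I -> A -> Prop :=
  fun i c => forall a, x i a -> exists b, y i b /\ at_ (meet (c,a)) b.

Lemma imp_adj I (x a b : I -> A -> Prop) : le I (meetP x a) b <-> le I x (impP a b).
Proof.
  split; intro H.
  - apply le_elim in H as [r [Hr H]]. destruct (Hrc r Hr) as [rt [Hrt Hrt2]].
    apply le_intro with (fun a b => b = rt a); auto.
    intros i c Hc. exists (rt c); split; auto.
    intros a' Ha'. destruct (H i (meet (c,a'))) as [b' [Hb' Hr']].
    { exists c, a'; auto. }
    exists b'; split; auto.
  - apply le_elim in H as [s [Hs H]].
    apply le_intro with (comprel
      (fun x y => exists a b a' b', s a a' /\ idrel b b' /\ x = meet (a,b) /\ y = meet (a',b')) at_); auto.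
    intros i z [c [a' [Hc [Ha' ->]]]]. destruct (H i c Hc) as [d [Hd Hcd]].
    destruct (Hd a' Ha') as [b' [Hb' Hab]]. exists b'; split; auto.
    exists (meet (d,a')); split; auto. exists c, a', d, a'; repeat split; auto.
Qed.

Lemma is_imp_canon I (a b : I -> A -> Prop) :
  is_imp (fam_P (A -> Prop)) (fam_le (DR R)) I a b (impP a b).
Proof.
  intros x m Hm. destruct (is_meet_iso _ _ _ _ Hm) as [H1 H2]. split; intro H.
  - apply imp_adj. eapply le_trans; eauto.
  - apply imp_adj in H. eapply le_trans; eauto.
Qed.

Lemma is_imp_iso I (a b c : I -> A -> Prop) :
  is_imp (fam_P (A -> Prop)) (fam_le (DR R)) I a b c ->
  le I c (impP a b) /\ le I (impP a b) c.
Proof.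
  intros H. split.
  - apply imp_adj. apply (H c (meetP c a) (meetP_is_meet _ _ _)). apply le_refl.
  - apply (H (impP a b) (meetP (impP a b) a) (meetP_is_meet _ _ _)).
    apply imp_adj. apply le_refl.
Qed.

Lemma is_imp_transport I (a b c c' : I -> A -> Prop) :
  is_imp (fam_P (A -> Prop)) (fam_le (DR R)) I a b c ->
  le I c c' -> le I c' c ->
  is_imp (fam_P (A -> Prop)) (fam_le (DR R)) I a b c'.
Proof.
  intros H H1 H2 x m Hm. rewrite (H x m Hm). split; intro; eapply le_trans; eauto.
Qed.

Definition allP {I J} (u : J -> I) (y : J -> A -> Prop) : I -> A -> Prop :=
  fun i c => forall j, u j = i -> exists b, y j b /\ at_ (meet (c,c)) b.

Lemma all_adj I J (u : J -> I) :
  is_right_adjoint_re (fam_P (A -> Prop)) (fam_le (DR R)) (fam_re (A -> Prop)) I J u (allP u).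
Proof.
  intros x y. unfold fam_re. split; intro H.
  - apply le_elim in H as [r [Hr H]].
    destruct (Hrc (comprel (fun x y => exists b, x = meet (y,b)) r)) as [rt [Hrt Hrt2]].
    { apply Hcomp; auto. }
    apply le_intro with (fun a b => b = rt a); auto.
    intros i a Ha. exists (rt a); split; auto.
    intros j <-. destruct (H j a Ha) as [b [Hb Hab]]. exists b; split; auto.
    apply Hrt2. exists a; split; auto. exists (rt a); auto.
  - apply le_elim in H as [s [Hs H]].
    apply le_intro with (comprel s (comprel (fun a b => b = meet (a,a)) at_)); auto.
    intros j a Ha. destruct (H (u j) a Ha) as [c [Hc Hac]].
    destruct (Hc j eq_refl) as [b [Hb Hcb]]. exists b; split; auto.
    exists c; split; auto. exists (meet (c,c)); auto.
Qed.

Lemma all_iso I J (u : J -> I) all :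
  is_right_adjoint_re (fam_P (A -> Prop)) (fam_le (DR R)) (fam_re (A -> Prop)) I J u all ->
  forall y, le I (all y) (allP u y) /\ le I (allP u y) (all y).
Proof.
  intros H y. split.
  - apply (proj1 (all_adj I J u (all y) y)). apply (proj2 (H (all y) y)). apply le_refl.
  - apply (proj1 (H (allP u y) y)). apply (proj2 (all_adj I J u (allP u y) y)). apply le_refl.
Qed.

Definition topP {I} : I -> A -> Prop := fun _ _ => True.

Lemma tripos_of_rc :
  is_tripos (fam_P (A -> Prop)) (fam_le (DR R)) (fam_re (A -> Prop)).
Proof.
  split; [|split; [|split; [|split]]].
  - split; [|split; [|split; [|split]]].
    + intros; apply le_refl.
    + intros; eapply le_trans; eauto.
    + intros I J u x y H. exact (le_re _ _ u x y H).
    + intros; split; apply le_refl.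
    + intros; split; apply le_refl.
  - intros I. split; [|split].
    + exists topP. intros x. apply le_pw. intros; exact Logic.I.
    + intros x y. exists (meetP x y). apply meetP_is_meet.
    + intros a b. exists (impP a b). apply is_imp_canon.
  - intros I J u. split; [|split].
    + intros t Ht x. eapply le_trans; [|apply (le_re _ _ u (@topP I) t (Ht topP))].
      apply le_pw. intros; exact Logic.I.
    + intros x y m Hm. destruct (is_meet_iso _ _ _ _ Hm) as [H1 H2].
      apply (is_meet_transport _ _ _ (meetP (fam_re _ I J u x) (fam_re _ I J u y))).
      * apply meetP_is_meet.
      * apply (le_re _ _ u _ _ H2).
      * apply (le_re _ _ u _ _ H1).
    + intros a b c Hc. destruct (is_imp_iso _ _ _ _ Hc) as [H1 H2].
      apply (is_imp_transport _ _ _ (impP (fam_re _ I J u a) (fam_re _ I J u b))).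
      * apply is_imp_canon.
      * apply (le_re _ _ u _ _ H2).
      * apply (le_re _ _ u _ _ H1).
  - split.
    + intros I J u. exists (allP u). apply all_adj.
    + intros I J K L u v p1 p2 all_v all_p1 [Hpb1 Hpb2] Hv Hp1' y.
      destruct (all_iso _ _ _ _ Hv y) as [H1 H2].
      destruct (all_iso _ _ _ _ Hp1' (fam_re _ K L p2 y)) as [H3 H4].
      assert (E1 : le J (fam_re _ I J u (allP v y)) (allP p1 (fam_re _ K L p2 y))).
      { apply le_pw. unfold fam_re, allP. intros j c Hc l Hl.
        apply (Hc (p2 l)). rewrite <- Hpb1, Hl. reflexivity. }
      assert (E2 : le J (allP p1 (fam_re _ K L p2 y)) (fam_re _ I J u (allP v y))).
      { apply le_pw. unfold fam_re, allP. intros j c Hc k Hk.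
        destruct (Hpb2 j k (eq_sym Hk)) as [l [[Hl1 Hl2] _]].
        subst. apply Hc. reflexivity. }
      split.
      * eapply le_trans; [apply (le_re _ _ u _ _ H1)|]. eapply le_trans; [exact E1|exact H4].
      * eapply le_trans; [exact H3|]. eapply le_trans; [exact E2|]. apply (le_re _ _ u _ _ H2).
  - exists (A -> Prop), (fun U => U). intros I phi. exists phi. split; apply le_refl.
Qed.


Lemma rc_of_tripos :
  is_tripos (fam_P (A -> Prop)) (fam_le (DR R)) (fam_re (A -> Prop)) ->
  rel_complete R meet.
Proof.
  intros [_ [HF [HRP [[HU _] _]]]].
  set (I2 := ((A -> Prop) * (A -> Prop))%type).
  destruct (HF I2) as [_ [_ Himp]].
  destruct (Himp (fun p : I2 => fst p) (fun p : I2 => snd p)) as [cI HcI].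
  assert (Hat' : le I2 (meetP cI (fun p => fst p)) (fun p => snd p)).
  { apply (HcI cI _ (meetP_is_meet _ _ _)). apply le_refl. }
  apply le_elim in Hat' as [at' [Hat'R Hat']].
  set (F := A -> A -> Prop). set (L0 := (F * A * A)%type).
  set (pr := fun l : L0 => fst (fst l)).
  set (g0 := fun l : L0 => ((fun w => w = snd (fst l) /\ fst (fst l) (snd (fst l)) (snd l)),
                             (fun w => w = snd l)) : I2).
  set (Y := fun l : L0 => cI (g0 l)).
  destruct (HU F L0 pr) as [allpr Hallpr].
  set (Phi := allpr Y).
  assert (Hcu : le L0 (fun l => Phi (pr l)) Y).
  { apply (proj2 (Hallpr Phi Y)). apply le_refl. }
  apply le_elim in Hcu as [t [Ht Hcu]].
  exists (fun u w => exists z b x, u = meet (z,b) /\ t z x /\ at' (meet (x,b)) w).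
  split.
  { apply Hdown with (comprel (fun x y => exists a b a' b', t a a' /\ idrel b b' /\
        x = meet (a,b) /\ y = meet (a',b')) at').
    - apply Hcomp; auto.
    - intros u w [z [b [x [-> [Hzx Hw]]]]]. exists (meet (x,b)); split; auto.
      exists z, b, x, b; repeat split; auto. }
  intros r Hr.
  set (hh := fun a : A => (fun b c => r (meet (a,b)) c) : F).
  set (Q := fun (h : F) (z : A) => h = hh z).
  assert (HQ : le L0 (fun l => Q (pr l)) Y).
  { destruct (HRP I2 L0 g0) as [_ [_ Hre]].
    specialize (Hre _ _ _ HcI).
    apply (Hre _ _ (meetP_is_meet _ _ _)).
    apply le_intro with r; auto.
    intros [[h b] c] e [z [w [Hz [[Hw Hh] ->]]]].
    exists c; split; [reflexivity|].
    unfold pr, Q in Hz; simpl in Hz, Hw, Hh. subst w. rewrite Hz in Hh. exact Hh. }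
  apply (proj1 (Hallpr Q Y)) in HQ.
  apply le_elim in HQ as [s [Hs HQ]].
  assert (Hex : forall a, exists z, Phi (hh a) z /\ s a z).
  { intros a. exact (HQ (hh a) a eq_refl). }
  exists (fun a => proj1_sig (constructive_indefinite_description _ (Hex a))).
  split.
  { apply Hdown with s; auto. intros a b ->.
    exact (proj2 (proj2_sig (constructive_indefinite_description _ (Hex a)))). }
  intros a b c Habc.
  cbv beta. destruct (constructive_indefinite_description _ (Hex a)) as [z [Hz Hsz]]. simpl.
  destruct (Hcu ((hh a, b), c) z Hz) as [x [Hx Hzx]].
  destruct (Hat' (g0 ((hh a, b), c)) (meet (x,b))) as [w [Hw Hxw]].
  { exists x, b. split; [exact Hx|split; [split; [reflexivity|exact Habc]|reflexivity]]. }
  exists z, b, x. split; [reflexivity|split; auto]. simpl in Hw. subst w. exact Hxw.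
Qed.

End S.

Theorem theorem6p5 (A : Type) (R : relT A -> Prop)
  (top : unit -> A) (meet : A * A -> A) :
  is_upre A R ->
  is_cartesian R top meet ->
  (rel_complete R meet <->
   is_tripos (fam_P (A -> Prop)) (fam_le (DR R)) (fam_re (A -> Prop))).
Proof.
  intros [Hid [Hcomp Hdown]] [_ [_ [Hmono [Hdup0 Hpr0]]]].
  assert (Hmm : forall r s, R r -> R s ->
    R (fun x y => exists a b a' b', r a a' /\ s b b' /\ x = meet (a,b) /\ y = meet (a',b'))).
  { intros r s Hr Hs.
    apply Hdown with (image_rel meet (fun p q => r (fst p) (fst q) /\ s (snd p) (snd q))).
    - apply Hmono. exists r, s. split; auto. split; auto. intros p q H; exact H.
    - intros x y [a [b [a' [b' [H1 [H2 [-> ->]]]]]]]. exists (a,b), (a',b'). simpl. auto. }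
  assert (Hdup : R (fun a b => b = meet (a,a))).
  { apply Hdown with (1 := Hdup0). intros a b ->. exists a; auto. }
  destruct Hpr0 as [r1 [s1 [Hr1 [Hs1 Hsub]]]].
  assert (Hp1 : R (fun x y => exists b, x = meet (y,b))).
  { apply Hdown with r1; auto. intros x y [b ->].
    apply (Hsub (meet (y,b), meet (y,b)) (y,b)). exists (y,b); auto. }
  assert (Hp2 : R (fun x y => exists a, x = meet (a,y))).
  { apply Hdown with s1; auto. intros x y [a ->].
    apply (Hsub (meet (a,y), meet (a,y)) (a,y)). exists (a,y); auto. }
  split.
  - intros [at_ [Hat Hrc]]. eapply tripos_of_rc; eauto.
  - intros H. eapply rc_of_tripos; eauto.
Qed.
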